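(* Let $G=(V,P,d)$ be a reversible metric Markov chain, $f\in\mathbb R^V$, and $\phi:I\to\mathbb R$ a concave, three times differentiable function on an open interval $I$ containing $f(V)$. Let $x\in V$ and assume $\phi'''(s)\ge0$ whenever $\min_{y\sim x}f(y)<s<f(x)$. Then \[ \Delta(\phi\circ f)(x)\le\phi'(f(x))\,\Delta f(x)+\frac{P_0}{2}\,\phi''(f(x))\,(\nabla_-f(x))^2 . \]
   Context: $V$ finite; $P:V\times V\to[0,\infty)$ with symmetric support; $x\sim y$ iff $x\neq y$ and $P(x,y)>0$; $d$ is a path distance ($d(x,y)=\inf$ of $\sum d(x_{k-1},x_k)$ over paths $x=x_0\sim\dots\sim x_n=y$), finite; there is a probability $m$ with $m(x)P(x,y)=m(y)P(y,x)$. $\Delta f(x)=\sum_yP(x,y)(f(y)-f(x))$. $P_0=\inf_{x\sim y}P(x,y)d(x,y)^2$. $\nabla_-f(x)=\max_{y\sim x}\frac{(f(y)-f(x))_-}{d(x,y)}$, where $s_-=\max(-s,0)$. *)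

(* Defs.v *)
From Stdlib Require Import Reals.
From Coquelicot Require Import Coquelicot.
From mathcomp Require Import all_boot.

Set Implicit Arguments.
Unset Strict Implicit.
Unset Printing Implicit Defensive.

Local Open Scope R_scope.

Definition adjb (V : finType) (P : V -> V -> R) (x y : V) : bool :=
  (x != y) && (if Rlt_dec 0 (P x y) then true else false).

(* length of the path x = x_0 ~ x_1 ~ ... ~ x_n (s = [x_1; ...; x_n]) *)
Definition path_length (V : finType) (d : V -> V -> R) (x : V) (s : seq V) : R :=
  \big[Rplus/0]_(p <- zip (x :: s) s) d p.1 p.2.

Definition reversible_metric_chain (V : finType) (P d : V -> V -> R) : Prop :=
  (forall x y, 0 <= P x y) /\
  (forall x y, 0 < P x y <-> 0 < P y x) /\
  (forall x y, 0 <= d x y) /\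
  (forall x y, d x y = 0 <-> x = y) /\
  (forall x y, d x y = d y x) /\
  (forall x y z, d x z <= d x y + d y z) /\
  (* d is the path distance: d(x,y) = inf over paths x ~ ... ~ y of the sum of
     d along edges, the infimum being finite (hence attained) *)
  (forall x y,
     (forall s, path (adjb P) x s -> last x s = y -> d x y <= path_length d x s) /\
     (exists s, path (adjb P) x s /\ last x s = y /\ path_length d x s = d x y)) /\
  (exists m : V -> R,
     (forall x, 0 <= m x) /\ \big[Rplus/0]_(x : V) m x = 1 /\
     (forall x y, m x * P x y = m y * P y x)).

Definition Lap (V : finType) (P : V -> V -> R) (f : V -> R) (x : V) : R :=
  \big[Rplus/0]_(y : V) (P x y * (f y - f x)).

Definition negpart (s : R) : R := Rmax (- s) 0.

(* ∇_- f(x) = max_{y ~ x} (f(y)-f(x))_- / d(x,y); (= 0 if x has no neighbour) *)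
Definition grad_minus (V : finType) (P d : V -> V -> R) (f : V -> R) (x : V) : R :=
  \big[Rmax/0]_(y : V | adjb P x y) (negpart (f y - f x) / d x y).

(* P_0 = inf_{x ~ y} P(x,y) d(x,y)^2 ; convention 0 if there is no edge *)
Definition P0 (V : finType) (P d : V -> V -> R) : R :=
  match [seq P p.1 p.2 * d p.1 p.2 ^ 2 | p <- enum [pred p : V * V | adjb P p.1 p.2]] with
  | [::] => 0
  | v :: vs => foldr Rmin v vs
  end.

Definition in_oint (a b : Rbar) (s : R) : Prop := Rbar_lt a s /\ Rbar_lt s b.

Definition concave_on (a b : Rbar) (phi : R -> R) : Prop :=
  forall u v t, in_oint a b u -> in_oint a b v -> 0 <= t <= 1 ->
    t * phi u + (1 - t) * phi v <= phi (t * u + (1 - t) * v).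

(* Main.v *)
Require Import Defs.
From HB Require Import structures.
From Stdlib Require Import Reals Lra.
From Coquelicot Require Import Coquelicot.
From mathcomp Require Import all_boot.
Local Open Scope R_scope.
Lemma mvt (F dF : R -> R) u v : u < v ->
  (forall s, u <= s <= v -> is_derive F s (dF s)) ->
  exists z, u < z < v /\ F v - F u = dF z * (v - u).
Proof.
intros H Hd. destruct (MVT_cor2 F dF u v H) as [z [Hz1 Hz2]].
- intros; apply is_derive_Reals; auto.
- exists z; auto.
Qed.

Lemma oint_conv a b u v s : in_oint a b u -> in_oint a b v -> u <= s <= v -> in_oint a b s.
Proof.
unfold in_oint; destruct a as [ra| |]; destruct b as [rb| |]; simpl; intuition lra.
Qed.

Lemma oint_open a b c : in_oint a b c -> exists e, 0 < e /\ forall s, Rabs (s - c) < e -> in_oint a b s.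
Proof.
unfold in_oint; destruct a as [ra| |]; destruct b as [rb| |]; simpl; intros [H1 H2];
 try contradiction.
- exists (Rmin (c - ra) (rb - c)); split. apply Rmin_pos; lra.
  intros s Hs. apply Rabs_def2 in Hs. destruct Hs.
  pose proof (Rmin_l (c - ra) (rb - c)); pose proof (Rmin_r (c - ra) (rb - c)). lra.
- exists (c - ra); split. lra. intros s Hs. apply Rabs_def2 in Hs. lra.
- exists (rb - c); split. lra. intros s Hs. apply Rabs_def2 in Hs. lra.
- exists 1; split. lra. auto.
Qed.
Lemma cont_eps (F : R -> R) (dF c : R) : is_derive F c dF -> forall eps, 0 < eps ->
  exists del, 0 < del /\ forall s, Rabs (s - c) < del -> Rabs (F s - F c) < eps.
Proof.
intros H eps Heps.
assert (Hc : continuity_pt F c).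
{ apply continuity_pt_filterlim. apply (@ex_derive_continuous R_AbsRing R_NormedModule). exists dF; exact H. }
destruct (Hc eps Heps) as [del [Hd1 Hd2]].
exists del; split; auto. intros s Hs.
destruct (Req_dec s c) as [->|Hne]. rewrite Rminus_diag Rabs_R0; auto.
apply (Hd2 s). split. split. constructor. auto. exact Hs.
Qed.

Lemma phi2_nonpos a b (phi phi1 phi2 phi3 : R -> R)
  (Hconc : concave_on a b phi)
  (Hd1 : forall s, in_oint a b s -> is_derive phi s (phi1 s))
  (Hd2 : forall s, in_oint a b s -> is_derive phi1 s (phi2 s))
  (Hd3 : forall s, in_oint a b s -> is_derive phi2 s (phi3 s))
  c : in_oint a b c -> phi2 c <= 0.
Proof.
intros Hc. destruct (Rle_lt_dec (phi2 c) 0) as [|Hpos]; auto. exfalso.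
destruct (cont_eps _ _ _ (Hd3 c Hc) (phi2 c) Hpos) as [del [Hdel Hcont]].
destruct (oint_open _ _ _ Hc) as [e [He Hopen]].
set (h := Rmin del e / 2).
assert (Hh : 0 < h). { unfold h. pose proof (Rmin_pos _ _ Hdel He). lra. }
assert (Hh2 : h < del /\ h < e). { unfold h. pose proof (Rmin_l del e). pose proof (Rmin_r del e). lra. }
assert (Hin : forall s, c - h <= s <= c + h -> in_oint a b s /\ 0 < phi2 s).
{ intros s Hs. assert (Rabs (s - c) < del /\ Rabs (s - c) < e).
  { split; apply Rabs_def1; lra. }
  split. apply Hopen; tauto.
  assert (Hx := Hcont s (proj1 H)). apply Rabs_def2 in Hx. lra. }
destruct (mvt phi phi1 c (c + h)) as [x1 [Hx1 E1]]. lra.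
{ intros s Hs. apply Hd1. apply Hin. lra. }
destruct (mvt phi phi1 (c - h) c) as [x2 [Hx2 E2]]. lra.
{ intros s Hs. apply Hd1. apply Hin. lra. }
destruct (mvt phi1 phi2 x2 x1) as [x3 [Hx3 E3]]. lra.
{ intros s Hs. apply Hd2. apply Hin. lra. }
assert (P3 : 0 < phi2 x3) by (apply Hin; lra).
assert (Hcc := Hconc (c + h) (c - h) (1/2) (proj1 (Hin (c+h) ltac:(lra))) (proj1 (Hin (c-h) ltac:(lra))) ltac:(lra)).
replace (1 / 2 * (c + h) + (1 - 1 / 2) * (c - h)) with c in Hcc by field.
assert (0 < (phi1 x1 - phi1 x2) * h).
{ apply Rmult_lt_0_compat; auto. rewrite E3. apply Rmult_lt_0_compat; lra. }
replace (c + h - c) with h in E1 by ring.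
replace (c - (c - h)) with h in E2 by ring.
lra.
Qed.
Lemma taylor_up a b (phi phi1 phi2 : R -> R)
  (Hd1 : forall s, in_oint a b s -> is_derive phi s (phi1 s))
  (Hd2 : forall s, in_oint a b s -> is_derive phi1 s (phi2 s))
  (Hneg : forall s, in_oint a b s -> phi2 s <= 0)
  c v : in_oint a b c -> in_oint a b v -> c <= v ->
  phi v - phi c <= phi1 c * (v - c).
Proof.
intros Hc Hv Hcv. destruct (Req_dec c v) as [->|Hne]. rewrite !Rminus_diag; lra.
destruct (mvt phi phi1 c v) as [x1 [Hx1 E1]]. lra.
{ intros s Hs. apply Hd1. apply (oint_conv _ _ c v); auto. }
destruct (mvt phi1 phi2 c x1) as [x2 [Hx2 E2]]. lra.
{ intros s Hs. apply Hd2. apply (oint_conv _ _ c v); auto. lra. }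
assert (phi2 x2 <= 0) by (apply Hneg; apply (oint_conv _ _ c v); auto; lra).
assert (phi1 x1 <= phi1 c).
{ assert (phi2 x2 * (x1 - c) <= 0). apply Rmult_le_0_r; lra. lra. }
rewrite E1. apply Rmult_le_compat_r; lra.
Qed.

Lemma taylor_down a b (phi phi1 phi2 phi3 : R -> R)
  (Hd1 : forall s, in_oint a b s -> is_derive phi s (phi1 s))
  (Hd2 : forall s, in_oint a b s -> is_derive phi1 s (phi2 s))
  (Hd3 : forall s, in_oint a b s -> is_derive phi2 s (phi3 s))
  u c : in_oint a b u -> in_oint a b c -> u < c ->
  (forall s, u < s < c -> 0 <= phi3 s) ->
  phi u - phi c <= phi1 c * (u - c) + phi2 c / 2 * (u - c) ^ 2.
Proof.
intros Hu Hc Huc H3.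
assert (Hin : forall s, u <= s <= c -> in_oint a b s) by (intros; apply (oint_conv _ _ u c); auto).
set (h := fun s => phi s - phi c - phi1 c * (s - c) - phi2 c * ((s-c)*(s-c)) / 2).
set (k := fun s => phi1 s - phi1 c - phi2 c * (s - c)).
assert (Hh : forall s, u <= s <= c -> is_derive h s (k s)).
{ intros s Hs. unfold h, k. eapply is_derive_ext. intro t. reflexivity.
  assert (D := Hd1 s (Hin s Hs)).
  auto_derive. exists (phi1 s); exact D.
  rewrite (is_derive_unique _ _ _ D). field. }
assert (Hk : forall s, u <= s <= c -> is_derive k s (phi2 s - phi2 c)).
{ intros s Hs. unfold k. eapply is_derive_ext. intro t. reflexivity.
  assert (D := Hd2 s (Hin s Hs)).
  auto_derive. exists (phi2 s); exact D.
  rewrite (is_derive_unique _ _ _ D). field. }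
destruct (mvt h k u c Huc Hh) as [x1 [Hx1 E1]].
destruct (mvt k (fun s => phi2 s - phi2 c) x1 c ltac:(lra)) as [x2 [Hx2 E2]].
{ intros s Hs; apply Hk; lra. }
destruct (mvt phi2 phi3 x2 c ltac:(lra)) as [x3 [Hx3 E3]].
{ intros s Hs; apply Hd3, Hin; lra. }
assert (0 <= phi3 x3) by (apply H3; lra).
assert (phi2 x2 <= phi2 c).
{ assert (0 <= phi3 x3 * (c - x2)) by (apply Rmult_le_pos; lra). lra. }
assert (0 <= k x1).
{ assert (k c = 0) by (unfold k; ring).
  assert (0 <= (phi2 c - phi2 x2) * (c - x1)) by (apply Rmult_le_pos; lra). lra. }
assert (h c = 0) by (unfold h; field).
assert (0 <= k x1 * (c - u)) by (apply Rmult_le_pos; lra).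
assert (h u <= 0) by lra.
unfold h in H5. replace ((u-c)^2) with ((u-c)*(u-c)) by ring. lra.
Qed.
Lemma Rplus_assoc' : associative Rplus. Proof. intros a b c; ring. Qed.
HB.instance Definition _ := Monoid.isComLaw.Build R 0 Rplus Rplus_assoc' Rplus_comm Rplus_0_l.

Lemma sum_scal (V : finType) (k : R) (F : V -> R) :
  \big[Rplus/0]_(y : V) (k * F y) = k * \big[Rplus/0]_(y : V) F y.
Proof.
apply (big_rec2 (fun a b => a = k * b)). ring.
intros i y1 y2 _ ->. ring.
Qed.

Lemma sum_le (V : finType) (F G : V -> R) : (forall y, F y <= G y) ->
  \big[Rplus/0]_(y : V) F y <= \big[Rplus/0]_(y : V) G y.
Proof.
intros H. apply (big_ind2 (fun a b => a <= b)). lra. intros; lra. auto.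
Qed.

Lemma sum_le_one (V : finType) (F : V -> R) y0 : (forall y, F y <= 0) ->
  \big[Rplus/0]_(y : V) F y <= F y0.
Proof.
intros H. rewrite (bigD1 y0) //=.
assert (\big[Rplus/0]_(i | i != y0) F i <= 0).
{ apply (big_ind (fun a => a <= 0)). lra. intros; lra. auto. }
lra.
Qed.

Lemma sum_nonpos (V : finType) (F : V -> R) : (forall y, F y <= 0) ->
  \big[Rplus/0]_(y : V) F y <= 0.
Proof.
intros H. apply (big_ind (fun a => a <= 0)). lra. intros; lra. auto.
Qed.

Lemma sum_split (V : finType) (F G : V -> R) :
  \big[Rplus/0]_(y : V) (F y + G y) = \big[Rplus/0]_(y : V) F y + \big[Rplus/0]_(y : V) G y.
Proof. exact: big_split. Qed.

Lemma bigmax_cases (V : finType) (p : pred V) (F : V -> R) :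
  let m := \big[Rmax/0]_(y : V | p y) F y in
  m = 0 \/ exists y, p y /\ m = F y.
Proof.
apply (big_ind (fun v => v = 0 \/ exists y, p y /\ v = F y)). auto.
intros u v Hu Hv. unfold Rmax. destruct (Rle_dec u v); auto.
intros i Hi. right. exists i; auto.
Qed.

Lemma foldr_min_le (vs : seq R) v z : List.In z (v :: vs) -> foldr Rmin v vs <= z.
Proof.
elim: vs v => [|w ws IH] v /=.
- intros [->|[]]. lra.
- intros [->|[->|Hz]].
  + eapply Rle_trans. apply Rmin_r. apply IH. left; auto.
  + apply Rmin_l.
  + eapply Rle_trans. apply Rmin_r. apply IH. right; auto.
Qed.

Lemma in_map_In (T : eqType) (g : T -> R) (l : seq T) p : p \in l -> List.In (g p) [seq g q | q <- l].
Proof.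
elim: l => [|q l IH] //=. rewrite in_cons => /orP [/eqP ->|H]. left; auto. right; auto.
Qed.

Lemma min_list_le (T : eqType) (g : T -> R) (l : seq T) p : p \in l ->
  match [seq g q | q <- l] with [::] => 0 | v :: vs => foldr Rmin v vs end <= g p.
Proof.
intros H. have := @in_map_In T g l p H. case: [seq g q | q <- l] => [|v vs] //=.
apply foldr_min_le.
Qed.

Theorem lemma5p2 (V : finType) (P d : V -> V -> R)
  (HG : reversible_metric_chain P d)
  (f : V -> R) (a b : Rbar) (phi phi1 phi2 phi3 : R -> R)
  (HI : forall v, in_oint a b (f v))
  (Hconc : concave_on a b phi)
  (Hd1 : forall s, in_oint a b s -> is_derive phi s (phi1 s))
  (Hd2 : forall s, in_oint a b s -> is_derive phi1 s (phi2 s))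
  (Hd3 : forall s, in_oint a b s -> is_derive phi2 s (phi3 s))
  (x : V)
  (H3 : forall s, (exists y, adjb P x y /\ f y < s) -> s < f x -> 0 <= phi3 s) :
  Lap P (fun v => phi (f v)) x <=
    phi1 (f x) * Lap P f x + P0 P d / 2 * phi2 (f x) * (grad_minus P d f x) ^ 2.
Proof.
destruct HG as [Pnn [_ [dnn [dz _]]]].
set (c := f x).
assert (Hneg : forall s, in_oint a b s -> phi2 s <= 0).
{ intros s Hs. exact (phi2_nonpos _ _ _ _ _ _ Hconc Hd1 Hd2 Hd3 _ Hs). }
assert (Hc2 : phi2 c <= 0) by (apply Hneg, HI).
set (B := fun y => P x y * (phi2 c / 2 * negpart (f y - c) ^ 2)).
assert (Hpt : forall y, P x y * (phi (f y) - phi c) <=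
   P x y * (f y - c) * phi1 c + B y).
{ intros y. unfold B. destruct (Rle_lt_dec c (f y)) as [Hle|Hlt].
  - unfold negpart. rewrite Rmax_right; [|lra].
    assert (phi (f y) - phi c <= phi1 c * (f y - c)).
    { apply (taylor_up _ _ _ _ _ Hd1 Hd2 Hneg); auto. apply HI. }
    assert (P x y * (phi (f y) - phi c) <= P x y * (phi1 c * (f y - c))).
    { apply Rmult_le_compat_l; auto. }
    replace (0 ^ 2) with 0 by ring. lra.
  - unfold negpart. rewrite Rmax_left; [|lra].
    destruct (Req_dec (P x y) 0) as [HP0|HP0].
    { rewrite HP0. lra. }
    assert (Hadj : adjb P x y).
    { unfold adjb. apply/andP; split.
      - apply/eqP. intros ->. unfold c in Hlt. lra.
      - destruct (Rlt_dec 0 (P x y)) as [|Hn]; auto. exfalso. apply Hn.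
        destruct (Pnn x y); auto. congruence. }
    assert (phi (f y) - phi c <= phi1 c * (f y - c) + phi2 c / 2 * (f y - c) ^ 2).
    { apply (taylor_down _ _ _ _ _ _ Hd1 Hd2 Hd3); try apply HI; auto.
      intros s [Hs1 Hs2]. apply H3. exists y; split; [exact Hadj | exact Hs1]. exact Hs2. }
    replace ((- (f y - c)) ^ 2) with ((f y - c) ^ 2) by ring.
    assert (P x y * (phi (f y) - phi c) <=
      P x y * (phi1 c * (f y - c) + phi2 c / 2 * (f y - c) ^ 2)).
    { apply Rmult_le_compat_l; auto. }
    lra. }
assert (Hsum : Lap P (fun v => phi (f v)) x <=
   phi1 c * Lap P f x + \big[Rplus/0]_(y : V) B y).
{ unfold Lap. eapply Rle_trans. apply sum_le. exact Hpt.
  rewrite sum_split -sum_scal.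
  apply Req_le. f_equal. apply eq_bigr => i _. fold c. ring. }
assert (HBn : forall y, B y <= 0).
{ intros y. unfold B. assert (0 <= negpart (f y - c) ^ 2) by (apply pow2_ge_0).
  assert (phi2 c / 2 * negpart (f y - c) ^ 2 <= 0).
  { apply Rmult_le_0_r; lra. }
  apply Rmult_le_0_l; auto. }
eapply Rle_trans. exact Hsum. apply Rplus_le_compat_l.
fold c.
destruct (bigmax_cases _ (adjb P x) (fun y => negpart (f y - f x) / d x y)) as [Hg|[y0 [Hy0 Hg]]];
 unfold grad_minus; rewrite Hg.
- replace (0 ^ 2) with 0 by ring. rewrite Rmult_0_r. apply sum_nonpos; auto.
- eapply Rle_trans. apply (sum_le_one _ _ y0 HBn).
  assert (Hd0 : 0 < d x y0).
  { destruct (dnn x y0); auto. exfalso. symmetry in H. apply dz in H.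
    subst. move: Hy0. rewrite /adjb eqxx. done. }
  assert (HP0 : P0 P d <= P x y0 * d x y0 ^ 2).
  { unfold P0. apply (@min_list_le _ (fun p : V * V => P p.1 p.2 * d p.1 p.2 ^ 2) _ (x, y0)).
    rewrite mem_enum. exact Hy0. }
  fold c.
  set (g := negpart (f y0 - c) / d x y0).
  assert (Hng : negpart (f y0 - c) = g * d x y0) by (unfold g; field; lra).
  unfold B. rewrite Hng.
  assert (Hk : phi2 c * g ^ 2 / 2 <= 0).
  { assert (0 <= g ^ 2) by apply pow2_ge_0. 
    assert (phi2 c * g ^ 2 <= 0) by (apply Rmult_le_0_r; lra). lra. }
  replace (P x y0 * (phi2 c / 2 * (g * d x y0) ^ 2)) with ((phi2 c * g ^ 2 / 2) * (P x y0 * d x y0 ^ 2)) by field.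
  replace (P0 P d / 2 * phi2 c * g ^ 2) with ((phi2 c * g ^ 2 / 2) * P0 P d) by field.
  apply Rmult_le_compat_neg_l; auto.
Qed.
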